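(* Let $n\neq 1$ be a real number, $k_n=n-1$, and $k_0,k_1,k_2\in\mathbb{R}$. On the phase space with canonical coordinates $(r,\phi,p_r,p_\phi)$, $r>0$, restricted to the open set where $\cos(k_n\phi)\neq 0$, consider $$H_{nb}=\tfrac12 r^{2n}\Big(p_r^2+\tfrac{p_\phi^2}{r^2}\Big)+\frac{k_0}{r^{2k_n}}\big(\cos^2(k_n\phi)+4\sin^2(k_n\phi)\big)+r^{2k_n}\frac{k_1}{\cos^2(k_n\phi)}+\frac{k_2}{r^{k_n}}\sin(k_n\phi).$$ With $P_1=r^n\big(p_r\cos(k_n\phi)+\tfrac1r p_\phi\sin(k_n\phi)\big)$ and $P_2=r^n\big(p_r\sin(k_n\phi)-\tfrac1r p_\phi\cos(k_n\phi)\big)$, the functions $$J_{b1}=P_1^2+\frac{2k_0}{r^{2k_n}}\cos^2(k_n\phi)+2k_1r^{2k_n}\sec^2(k_n\phi),\qquad J_{b2}=P_2^2+\frac{8k_0}{r^{2k_n}}\sin^2(k_n\phi)+\frac{2k_2}{r^{k_n}}\sin(k_n\phi),$$ $$J_{b3}=P_1p_\phi-\frac{k_0}{r^{3k_n}}\cos(k_n\phi)\sin(2k_n\phi)+k_1r^{k_n}\sec^3(k_n\phi)\sin(2k_n\phi)-\frac{k_2}{2r^{2k_n}}\cos^2(k_n\phi)$$ are three independent constants of motion of $H_{nb}$, i.e. $\{J_{bj},H_{nb}\}=0$ for $j=1,2,3$; hence $H_{nb}$ is superintegrable.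
   Context: The Poisson bracket is the canonical one in $(r,\phi,p_r,p_\phi)$. A constant of motion of $H$ is a function $F$ with $\{F,H\}=0$. *)

(* Defs.v *)
From Stdlib Require Import Reals.
From Coquelicot Require Import Coquelicot.
Open Scope R_scope.

Definition PSfun := R -> R -> R -> R -> R.

Definition d_r (F : PSfun) r ph pr pph := Derive (fun x => F x ph pr pph) r.
Definition d_phi (F : PSfun) r ph pr pph := Derive (fun x => F r x pr pph) ph.
Definition d_pr (F : PSfun) r ph pr pph := Derive (fun x => F r ph x pph) pr.
Definition d_pphi (F : PSfun) r ph pr pph := Derive (fun x => F r ph pr x) pph.

Definition poisson (F G : PSfun) : PSfun := fun r ph pr pph =>
  d_r F r ph pr pph * d_pr G r ph pr pph - d_pr F r ph pr pph * d_r G r ph pr pph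
  + d_phi F r ph pr pph * d_pphi G r ph pr pph - d_pphi F r ph pr pph * d_phi G r ph pr pph.

Definition ps_domain (kn : R) r ph (pr pph : R) : Prop := 0 < r /\ cos (kn * ph) <> 0.

Definition grad_indep3 (F1 F2 F3 : PSfun) r ph pr pph : Prop :=
  forall a b c : R,
    a * d_r F1 r ph pr pph + b * d_r F2 r ph pr pph + c * d_r F3 r ph pr pph = 0 ->
    a * d_phi F1 r ph pr pph + b * d_phi F2 r ph pr pph + c * d_phi F3 r ph pr pph = 0 ->
    a * d_pr F1 r ph pr pph + b * d_pr F2 r ph pr pph + c * d_pr F3 r ph pr pph = 0 ->
    a * d_pphi F1 r ph pr pph + b * d_pphi F2 r ph pr pph + c * d_pphi F3 r ph pr pph = 0 ->
    a = 0 /\ b = 0 /\ c = 0.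

(* Functional independence on the ps_domain: the gradients are linearly
   independent on a dense subset of the ps_domain. *)
Definition functionally_independent3 (kn : R) (F1 F2 F3 : PSfun) : Prop :=
  forall r ph pr pph eps, ps_domain kn r ph pr pph -> 0 < eps ->
    exists r' ph' pr' pph',
      ps_domain kn r' ph' pr' pph' /\
      Rabs (r' - r) < eps /\ Rabs (ph' - ph) < eps /\
      Rabs (pr' - pr) < eps /\ Rabs (pph' - pph) < eps /\
      grad_indep3 F1 F2 F3 r' ph' pr' pph'.

Definition Hnb (n k0 k1 k2 : R) : PSfun := fun r ph pr pph =>
  let kn := n - 1 in
  / 2 * Rpower r (2 * n) * (pr ^ 2 + pph ^ 2 / r ^ 2)
  + k0 / Rpower r (2 * kn) * (cos (kn * ph) ^ 2 + 4 * sin (kn * ph) ^ 2)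
  + Rpower r (2 * kn) * (k1 / cos (kn * ph) ^ 2)
  + k2 / Rpower r kn * sin (kn * ph).

Definition P1 (n : R) : PSfun := fun r ph pr pph =>
  let kn := n - 1 in
  Rpower r n * (pr * cos (kn * ph) + / r * pph * sin (kn * ph)).

Definition P2 (n : R) : PSfun := fun r ph pr pph =>
  let kn := n - 1 in
  Rpower r n * (pr * sin (kn * ph) - / r * pph * cos (kn * ph)).

Definition sec (x : R) : R := / cos x.

Definition Jb1 (n k0 k1 k2 : R) : PSfun := fun r ph pr pph =>
  let kn := n - 1 in
  P1 n r ph pr pph ^ 2 + 2 * k0 / Rpower r (2 * kn) * cos (kn * ph) ^ 2
  + 2 * k1 * Rpower r (2 * kn) * sec (kn * ph) ^ 2.

Definition Jb2 (n k0 k1 k2 : R) : PSfun := fun r ph pr pph =>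
  let kn := n - 1 in
  P2 n r ph pr pph ^ 2 + 8 * k0 / Rpower r (2 * kn) * sin (kn * ph) ^ 2
  + 2 * k2 / Rpower r kn * sin (kn * ph).

Definition Jb3 (n k0 k1 k2 : R) : PSfun := fun r ph pr pph =>
  let kn := n - 1 in
  P1 n r ph pr pph * pph
  - k0 / Rpower r (3 * kn) * cos (kn * ph) * sin (2 * kn * ph)
  + k1 * Rpower r kn * sec (kn * ph) ^ 3 * sin (2 * kn * ph)
  - k2 / (2 * Rpower r (2 * kn)) * cos (kn * ph) ^ 2.

(* Main.v *)
Require Import Defs.
From Stdlib Require Import Reals Lra Nsatz.
From Coquelicot Require Import Coquelicot.
Open Scope R_scope.

Ltac nz := repeat first [ exact I | assumption | apply Rmult_integral_contrapositive_currified
   | apply Rgt_not_eq; apply exp_pos | lra | apply Rinv_neq_0_compat | split ].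

Ltac der := match goal with |- context [Derive ?f ?x] =>
  let v := fresh "v" in let H := fresh "H" in
  evar (v : R); assert (H : is_derive f x v); [ unfold v; auto_derive; [ .. | reflexivity ]; nz |];
  rewrite (is_derive_unique f x v H); unfold v; clear H v end.

Lemma eA n r : 0 < r -> exp ((n-1) * ln r) = exp (n * ln r) / r.
Proof. intros Hr. replace (n * ln r) with ((n-1)*ln r + ln r) by ring.
rewrite exp_plus, exp_ln by lra. field. lra. Qed.
Lemma eB n r : 0 < r -> exp (2*(n-1) * ln r) = exp (n * ln r)^2 / r^2.
Proof. intros Hr. replace (2*(n-1) * ln r) with ((n-1)*ln r + (n-1)*ln r) by ring.
rewrite exp_plus, eA by lra. field. lra. Qed.
Lemma eC n r : 0 < r -> exp (3*(n-1) * ln r) = exp (n * ln r)^3 / r^3.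
Proof. intros Hr. replace (3*(n-1) * ln r) with ((n-1)*ln r + (n-1)*ln r+ (n-1)*ln r) by ring.
rewrite !exp_plus, eA by lra. field. lra. Qed.
Lemma eD n r : exp (2*n * ln r) = exp (n * ln r)^2.
Proof. replace (2*n * ln r) with (n*ln r + n*ln r) by ring.
rewrite exp_plus. ring. Qed.
Lemma sD k ph : sin (2*k*ph) = 2 * sin (k*ph) * cos (k*ph).
Proof. replace (2*k*ph) with (2*(k*ph)) by ring. apply sin_2a. Qed.
Lemma cD k ph : cos (2*k*ph) = cos (k*ph)^2 - sin (k*ph)^2.
Proof. replace (2*k*ph) with (2*(k*ph)) by ring. rewrite cos_2a. ring. Qed.

Ltac prep Hr := rewrite ?(eA _ _ Hr), ?(eB _ _ Hr), ?(eC _ _ Hr), ?eD; try rewrite !sD; try rewrite !cD.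


Ltac finish Hr n ph r :=
  pose proof (sin2_cos2 ((n-1)*ph)) as Hcs;
  assert (HX : 0 < exp (n * ln r)) by apply exp_pos;
  set (c := cos ((n-1)*ph)) in *; set (s := sin ((n-1)*ph)) in *; set (X := exp (n * ln r)) in *;
  clearbody c s X; unfold Rsqr in Hcs;
  field_simplify; try (solve [repeat split; nz]);
  first [ solve [unfold Rdiv; ring] | match goal with |- ?N / ?D = 0 => assert (HN : N = 0); [clear - Hcs; cbn [pow]; nsatz | rewrite HN; unfold Rdiv; ring] end ].

Lemma pb_Jb1 n k0 k1 k2 r ph pr pph : 0 < r -> cos ((n-1)*ph) <> 0 ->
  poisson (Jb1 n k0 k1 k2) (Hnb n k0 k1 k2) r ph pr pph = 0.
Proof.
intros Hr Hc. unfold poisson, d_r, d_phi, d_pr, d_pphi, Jb1, Hnb, Defs.P1, Defs.P2, sec, Rpower.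
repeat der. prep Hr. finish Hr n ph r.
Qed.

Lemma pb_Jb2 n k0 k1 k2 r ph pr pph : 0 < r -> cos ((n-1)*ph) <> 0 ->
  poisson (Jb2 n k0 k1 k2) (Hnb n k0 k1 k2) r ph pr pph = 0.
Proof.
intros Hr Hc. unfold poisson, d_r, d_phi, d_pr, d_pphi, Jb2, Hnb, Defs.P1, Defs.P2, sec, Rpower.
repeat der. prep Hr. finish Hr n ph r.
Qed.

Lemma pb_Jb3 n k0 k1 k2 r ph pr pph : 0 < r -> cos ((n-1)*ph) <> 0 ->
  poisson (Jb3 n k0 k1 k2) (Hnb n k0 k1 k2) r ph pr pph = 0.
Proof.
intros Hr Hc. unfold poisson, d_r, d_phi, d_pr, d_pphi, Jb3, Hnb, Defs.P1, Defs.P2, sec, Rpower.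
repeat der. prep Hr. finish Hr n ph r.
Qed.

Ltac finish2 Hr n ph r := apply Rminus_diag_uniq; finish Hr n ph r.

Section D.
Variables (n k0 k1 k2 r ph pr pph : R).
Hypothesis (Hr : 0 < r) (Hc : cos ((n-1)*ph) <> 0).
Let cc := cos ((n-1)*ph).
Let ss := sin ((n-1)*ph).
Let AA := Rpower r n.
Let q1 := Defs.P1 n r ph pr pph.
Let q2 := Defs.P2 n r ph pr pph.

Ltac go := unfold cc, ss, AA, q1, q2, d_r, d_phi, d_pr, d_pphi, Jb1, Jb2, Jb3, Defs.P1, Defs.P2, sec, Rpower;
  repeat der; prep Hr; finish2 Hr n ph r.

Lemma J1pr : d_pr (Jb1 n k0 k1 k2) r ph pr pph = 2 * q1 * AA * cc. Proof. go. Qed.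
Lemma J2pr : d_pr (Jb2 n k0 k1 k2) r ph pr pph = 2 * q2 * AA * ss. Proof. go. Qed.
Lemma J3pr : d_pr (Jb3 n k0 k1 k2) r ph pr pph = AA * cc * pph. Proof. go. Qed.
Lemma J1pp : d_pphi (Jb1 n k0 k1 k2) r ph pr pph = 2 * q1 * (AA / r) * ss. Proof. go. Qed.
Lemma J2pp : d_pphi (Jb2 n k0 k1 k2) r ph pr pph = - 2 * q2 * (AA / r) * cc. Proof. go. Qed.
Lemma J3pp : d_pphi (Jb3 n k0 k1 k2) r ph pr pph = q1 + (AA / r) * ss * pph. Proof. go. Qed.
Lemma J1ph : d_phi (Jb1 n k0 k1 k2) r ph pr pph = - 2 * (n-1) * q1 * q2 + d_phi (Jb1 n k0 k1 k2) r ph 0 0. Proof. go. Qed.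
Lemma J2ph : d_phi (Jb2 n k0 k1 k2) r ph pr pph = 2 * (n-1) * q1 * q2 + d_phi (Jb2 n k0 k1 k2) r ph 0 0. Proof. go. Qed.
Lemma J3ph : d_phi (Jb3 n k0 k1 k2) r ph pr pph = - (n-1) * q2 * pph + d_phi (Jb3 n k0 k1 k2) r ph 0 0. Proof. go. Qed.
End D.

Definition det3 a1 b1 c1 a2 b2 c2 a3 b3 c3 : R :=
  a1*(b2*c3 - c2*b3) - b1*(a2*c3 - c2*a3) + c1*(a2*b3 - b2*a3).

Lemma cramer x1 y1 z1 x2 y2 z2 x3 y3 z3 a b c :
  a*x1+b*y1+c*z1=0 -> a*x2+b*y2+c*z2=0 -> a*x3+b*y3+c*z3=0 ->
  det3 x1 y1 z1 x2 y2 z2 x3 y3 z3 <> 0 -> a=0/\b=0/\c=0.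
Proof.
intros e1 e2 e3 hd. unfold det3 in hd.
assert (ha : a * (x1*(y2*z3 - z2*y3) - y1*(x2*z3 - z2*x3) + z1*(x2*y3 - y2*x3)) = 0) by nsatz.
assert (hb : b * (x1*(y2*z3 - z2*y3) - y1*(x2*z3 - z2*x3) + z1*(x2*y3 - y2*x3)) = 0) by nsatz.
assert (hc : c * (x1*(y2*z3 - z2*y3) - y1*(x2*z3 - z2*x3) + z1*(x2*y3 - y2*x3)) = 0) by nsatz.
apply Rmult_integral in ha; apply Rmult_integral in hb; apply Rmult_integral in hc.
intuition.
Qed.

Definition DD n k0 k1 k2 r ph pr pph :=
  det3 (d_pr (Jb1 n k0 k1 k2) r ph pr pph) (d_pr (Jb2 n k0 k1 k2) r ph pr pph) (d_pr (Jb3 n k0 k1 k2) r ph pr pph)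
       (d_pphi (Jb1 n k0 k1 k2) r ph pr pph) (d_pphi (Jb2 n k0 k1 k2) r ph pr pph) (d_pphi (Jb3 n k0 k1 k2) r ph pr pph)
       (d_phi (Jb1 n k0 k1 k2) r ph pr pph) (d_phi (Jb2 n k0 k1 k2) r ph pr pph) (d_phi (Jb3 n k0 k1 k2) r ph pr pph).

Lemma indep_of_DD n k0 k1 k2 r ph pr pph : DD n k0 k1 k2 r ph pr pph <> 0 ->
  grad_indep3 (Jb1 n k0 k1 k2) (Jb2 n k0 k1 k2) (Jb3 n k0 k1 k2) r ph pr pph.
Proof.
intros hd a b c e1 e2 e3 e4. exact (cramer _ _ _ _ _ _ _ _ _ a b c e3 e4 e2 hd).
Qed.

Lemma fourth n k0 k1 k2 r ph pr pph h be : 0 < r -> cos ((n-1)*ph) <> 0 ->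
  let c := cos ((n-1)*ph) in let s := sin ((n-1)*ph) in let A := Rpower r n in
  let P1d := A * (1 * c + / r * be * s) in let P2d := A * (1 * s - / r * be * c) in
  DD n k0 k1 k2 r ph pr pph - 4 * DD n k0 k1 k2 r ph (pr + 1*h) (pph + 1*h*be)
  + 6 * DD n k0 k1 k2 r ph (pr + 2*h) (pph + 2*h*be) - 4 * DD n k0 k1 k2 r ph (pr + 3*h) (pph + 3*h*be)
  + DD n k0 k1 k2 r ph (pr + 4*h) (pph + 4*h*be)
  = 24 * h^4 * det3 (2 * P1d * A * c) (2 * P2d * A * s) (A * c * be)
                    (2 * P1d * (A / r) * s) (- 2 * P2d * (A / r) * c) (P1d + (A / r) * s * be)
                    (- 2 * (n-1) * P1d * P2d) (2 * (n-1) * P1d * P2d) (- (n-1) * P2d * be).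
Proof.
intros Hr Hc c s A P1d P2d. unfold DD.
rewrite !J1pr, !J2pr, !J3pr, !J1pp, !J2pp, !J3pp by assumption.
rewrite (J1ph n k0 k1 k2 r ph pr pph), (J1ph n k0 k1 k2 r ph (pr + 1*h) (pph + 1*h*be)), (J1ph n k0 k1 k2 r ph (pr + 2*h) (pph + 2*h*be)), (J1ph n k0 k1 k2 r ph (pr + 3*h) (pph + 3*h*be)), (J1ph n k0 k1 k2 r ph (pr + 4*h) (pph + 4*h*be)), (J2ph n k0 k1 k2 r ph pr pph), (J2ph n k0 k1 k2 r ph (pr + 1*h) (pph + 1*h*be)), (J2ph n k0 k1 k2 r ph (pr + 2*h) (pph + 2*h*be)), (J2ph n k0 k1 k2 r ph (pr + 3*h) (pph + 3*h*be)), (J2ph n k0 k1 k2 r ph (pr + 4*h) (pph + 4*h*be)), (J3ph n k0 k1 k2 r ph pr pph), (J3ph n k0 k1 k2 r ph (pr + 1*h) (pph + 1*h*be)), (J3ph n k0 k1 k2 r ph (pr + 2*h) (pph + 2*h*be)), (J3ph n k0 k1 k2 r ph (pr + 3*h) (pph + 3*h*be)), (J3ph n k0 k1 k2 r ph (pr + 4*h) (pph + 4*h*be)) by assumption.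
unfold Defs.P1, Defs.P2, det3, P1d, P2d, A, c, s. ring.
Qed.

Lemma Qval n r c s A be : c*c + s*s = 1 -> 0 < r ->
  let P1d := A * (1 * c + / r * be * s) in let P2d := A * (1 * s - / r * be * c) in
  det3 (2 * P1d * A * c) (2 * P2d * A * s) (A * c * be)
       (2 * P1d * (A / r) * s) (- 2 * P2d * (A / r) * c) (P1d + (A / r) * s * be)
       (- 2 * (n-1) * P1d * P2d) (2 * (n-1) * P1d * P2d) (- (n-1) * P2d * be)
  = - 4 * (n-1) * A^2 * P1d^2 * P2d.
Proof.
intros Hcs Hr P1d P2d. unfold P1d, P2d, det3, Rdiv.
assert (Hri : r * / r = 1) by (field; lra).
set (ri := / r) in *. clearbody ri. clear - Hcs Hri. cbn [pow]. nsatz.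
Qed.

Lemma close1 eps p k x : 0 <= k <= 4 -> 0 <= x -> 4 * x < eps -> Rabs (p + k * x - p) < eps.
Proof.
intros Hk Hx H4. replace (p + k*x - p) with (k*x) by ring.
rewrite Rabs_pos_eq by nra. nra.
Qed.
Lemma close2 eps p k x y : 0 <= k <= 4 -> 0 <= x * y -> 4 * (x * y) < eps -> Rabs (p + k * x * y - p) < eps.
Proof.
intros Hk Hx H4. replace (p + k*x*y - p) with (k*(x*y)) by ring.
rewrite Rabs_pos_eq by nra. nra.
Qed.
Lemma close0 eps p : 0 < eps -> Rabs (p - p) < eps.
Proof. intros. replace (p - p) with 0 by ring. rewrite Rabs_R0. lra. Qed.

Ltac wit r ph pr pph h be k e := exists r, ph, (pr + k*h), (pph + k*h*be); split; [split; assumption|];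
       split; [apply close0; assumption|]; split; [apply close0; assumption|];
       split; [apply (close1 _ _ k); lra|]; split; [apply (close2 _ _ k); nra|]; apply indep_of_DD; exact e.

Theorem mainTheorem5 (n k0 k1 k2 : R) (hn : n <> 1) :
  (forall r ph pr pph, ps_domain (n - 1) r ph pr pph ->
     poisson (Jb1 n k0 k1 k2) (Hnb n k0 k1 k2) r ph pr pph = 0 /\
     poisson (Jb2 n k0 k1 k2) (Hnb n k0 k1 k2) r ph pr pph = 0 /\
     poisson (Jb3 n k0 k1 k2) (Hnb n k0 k1 k2) r ph pr pph = 0) /\
  functionally_independent3 (n - 1) (Jb1 n k0 k1 k2) (Jb2 n k0 k1 k2) (Jb3 n k0 k1 k2).
Proof.
split.
- intros r ph pr pph [Hr Hc]. split; [|split]; [apply pb_Jb1 | apply pb_Jb2 | apply pb_Jb3]; assumption.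
- intros r ph pr pph eps [Hr Hc] Heps.
  pose proof (sin2_cos2 ((n-1)*ph)) as Hcs. unfold Rsqr in Hcs.
  set (c := cos ((n-1)*ph)) in *. set (s := sin ((n-1)*ph)) in *.
  assert (HA : 0 < Rpower r n) by (unfold Rpower; apply exp_pos).
  set (A := Rpower r n) in *.
  set (h := eps / (8 * (1 + r))).
  assert (Hh : 0 < h) by (unfold h; apply Rdiv_lt_0_compat; lra).
  assert (Hh4 : 4 * h < eps) by (unfold h; apply (Rmult_lt_reg_r (8*(1+r))); [lra|]; field_simplify; nra).
  assert (Hh4r : 4 * (h * r) < eps) by (unfold h; apply (Rmult_lt_reg_r (8*(1+r))); [lra|]; field_simplify; nra).
  assert (Hkn : n - 1 <> 0) by lra.
  destruct (Req_dec s 0) as [Hs | Hs].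
  +
    assert (HQ : 24 * h^4 * (- 4 * (n-1) * A^2 * (A * (1 * c + / r * r * s))^2 * (A * (1 * s - / r * r * c))) <> 0).
    { rewrite Hs. replace (/ r * r) with 1 by (field; lra).
      apply Rmult_integral_contrapositive_currified; [apply Rmult_integral_contrapositive_currified; [lra | apply pow_nonzero; lra]|].
      repeat apply Rmult_integral_contrapositive_currified; try lra; try (apply pow_nonzero); nra. }
    rewrite <- (Qval n r c s A r) in HQ by (lra || nra).
    unfold c, s, A in HQ; rewrite <- (fourth n k0 k1 k2 r ph pr pph h r Hr Hc) in HQ.
    destruct (Req_dec (DD n k0 k1 k2 r ph pr pph) 0) as [e0|e0];
      [| exists r, ph, pr, pph; split; [split; assumption|]; split; [apply close0; assumption|];
         split; [apply close0; assumption|]; split; [apply close0; assumption|]; split; [apply close0; assumption|];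
         apply indep_of_DD; exact e0].
    destruct (Req_dec (DD n k0 k1 k2 r ph (pr + 1*h) (pph + 1*h*r)) 0) as [e1|e1]; [| wit r ph pr pph h r 1 e1].
    destruct (Req_dec (DD n k0 k1 k2 r ph (pr + 2*h) (pph + 2*h*r)) 0) as [e2|e2]; [| wit r ph pr pph h r 2 e2].
    destruct (Req_dec (DD n k0 k1 k2 r ph (pr + 3*h) (pph + 3*h*r)) 0) as [e3|e3]; [| wit r ph pr pph h r 3 e3].
    destruct (Req_dec (DD n k0 k1 k2 r ph (pr + 4*h) (pph + 4*h*r)) 0) as [e4|e4]; [| wit r ph pr pph h r 4 e4].
    exfalso. apply HQ. rewrite e0, e1, e2, e3, e4. ring.
  +
    assert (HQ : 24 * h^4 * (- 4 * (n-1) * A^2 * (A * (1 * c + / r * 0 * s))^2 * (A * (1 * s - / r * 0 * c))) <> 0).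
    { replace (/ r * 0) with 0 by ring.
      apply Rmult_integral_contrapositive_currified; [apply Rmult_integral_contrapositive_currified; [lra | apply pow_nonzero; lra]|].
      repeat apply Rmult_integral_contrapositive_currified; try lra; try (apply pow_nonzero); nra. }
    rewrite <- (Qval n r c s A 0) in HQ by (lra || nra).
    unfold c, s, A in HQ; rewrite <- (fourth n k0 k1 k2 r ph pr pph h 0 Hr Hc) in HQ.
    destruct (Req_dec (DD n k0 k1 k2 r ph pr pph) 0) as [e0|e0];
      [| exists r, ph, pr, pph; split; [split; assumption|]; split; [apply close0; assumption|];
         split; [apply close0; assumption|]; split; [apply close0; assumption|]; split; [apply close0; assumption|];
         apply indep_of_DD; exact e0].
    destruct (Req_dec (DD n k0 k1 k2 r ph (pr + 1*h) (pph + 1*h*0)) 0) as [e1|e1]; [| wit r ph pr pph h 0 1 e1].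
    destruct (Req_dec (DD n k0 k1 k2 r ph (pr + 2*h) (pph + 2*h*0)) 0) as [e2|e2]; [| wit r ph pr pph h 0 2 e2].
    destruct (Req_dec (DD n k0 k1 k2 r ph (pr + 3*h) (pph + 3*h*0)) 0) as [e3|e3]; [| wit r ph pr pph h 0 3 e3].
    destruct (Req_dec (DD n k0 k1 k2 r ph (pr + 4*h) (pph + 4*h*0)) 0) as [e4|e4]; [| wit r ph pr pph h 0 4 e4].
    exfalso. apply HQ. rewrite e0, e1, e2, e3, e4. ring.
Qed.
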